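(* Let $m\ge2$, $n$ be integers and $k$ an integer with $1\le k\le n^2-3n+2$, written $k=(n-1)q+r$ with $q\ge0$, $1\le r\le n-1$. Let $M_1=(\mu_{ij})$ be the $n\times n$ $0/1$ matrix with $\mu_{1,n-1}=\mu_{1,n}=1$, $\mu_{i,i-1}=1$ for $2\le i\le n$, all other entries $0$. Let $\mathbb{A}_0$ be the order $m$, dimension $n$ tensor with $(\mathbb{A}_0)_{ij\ldots j}=\mu_{ij}$ and all entries with $i_2,\ldots,i_m$ not all equal equal to $0$. Let $\mathbb{A}_k=(a^{(k)}_{i_1\ldots i_m})$ be the order $m$, dimension $n$ tensor with $a^{(k)}_{ij\ldots j}=\mu_{ij}$; $a^{(k)}_{ii_2\ldots i_m}=1$ whenever $i\in[n]\setminus\{r-q,\ldots,r,r+1\}\pmod n$ and the set of distinct values among $i_2,\ldots,i_m$ equals $\{r-q-1,r\}\pmod n$; and all other entries $0$. Then for every integer $t$ with $1\le t\le k$ and every $j\in\{1,2,\ldots,n-2\}\cup\{n\}$, $S_t(\mathbb{A}_k,j)=S_t(\mathbb{A}_0,j)$.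
   Context: For an integer $a$, $|a|_n$ is the least positive integer congruent to $a$ modulo $n$, and $\{a_1,\ldots,a_s\}\pmod n$ means $\{|a_1|_n,\ldots,|a_s|_n\}$. General product of dimension-$n$ tensors: for $\mathbb{A}$ of order $m\ge2$ and $\mathbb{B}$ of order $k\ge1$, $(\mathbb{A}\mathbb{B})_{i\alpha_1\ldots\alpha_{m-1}}=\sum_{i_2,\ldots,i_m=1}^n a_{ii_2\ldots i_m}b_{i_2\alpha_1}\cdots b_{i_m\alpha_{m-1}}$ ($\alpha_l\in[n]^{k-1}$); it is associative and $\mathbb{A}^k$ is the $k$-fold power. $(M(\mathbb{C}))_{ij}=c_{ij\ldots j}$ is the majorization matrix. For $j\in[n]$, $k\ge1$: $S_k(\mathbb{A},j)=\{u\in[n]\mid (M(\mathbb{A}^k))_{uj}>0\}$. *)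

(* Defs.v *)
From mathcomp Require Import all_boot all_order all_algebra.
Set Implicit Arguments. Unset Strict Implicit. Unset Printing Implicit Defensive.

(* A tensor of dimension n (with nonnegative integer entries): entry
   T i [:: i2; ...; ip] for an order-p tensor (the tail has length p-1).
   Indices are 0-based: 'I_n stands for [n] = {1,...,n} via v |-> v+1. *)
Definition tensor (n : nat) := 'I_n -> seq 'I_n -> nat.

(* General product A B, A of order m, B of order k:
   (AB)_{i alpha_1 ... alpha_{m-1}} = sum_{i2..im} a_{i i2..im} b_{i2 alpha_1} ... b_{im alpha_{m-1}},
   where the tail s (of length (m-1)(k-1)) is split into m-1 blocks of length k-1. *)
Definition tprod (n m k : nat) (A B : tensor n) : tensor n :=
  fun i s => \sum_(t : (m-1).-tuple 'I_n)
     A i t * \prod_(l < m-1) B (tnth t l) (take (k-1) (drop (l * (k-1)) s)).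

(* order of A^(t+1) when A has order m *)
Fixpoint pow_order (m t : nat) : nat :=
  match t with 0 => m | t'.+1 => (m-1) * (pow_order m t' - 1) + 1 end.

(* tpow' m A t = A^(t+1) *)
Fixpoint tpow' (n m : nat) (A : tensor n) (t : nat) : tensor n :=
  match t with
  | 0 => A
  | t'.+1 => tprod m (pow_order m t') A (tpow' m A t')
  end.

(* A^t for t >= 1, of order pow_order m t.-1 *)
Definition tpow (n m : nat) (A : tensor n) (t : nat) : tensor n := tpow' m A t.-1.

Definition majorization (n p : nat) (C : tensor n) : 'I_n -> 'I_n -> nat :=
  fun i j => C i (nseq (p-1) j).

Definition S_set (n m : nat) (A : tensor n) (t : nat) (j : 'I_n) : {set 'I_n} :=
  [set u : 'I_n | 0 < majorization (pow_order m t.-1) (tpow m A t) u j].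

(* mu_{ij}, 1-based indices *)
Definition mu (n i j : nat) : bool :=
  ((i == 1) && ((j == n - 1) || (j == n))) || ((2 <= i <= n) && (j == i - 1)).

(* 0-based index of |x|_n, i.e. |x|_n - 1 = (x - 1) mod n *)
Definition res0 (n : nat) (x : int) : nat := `|((x - 1) %% n)%Z|%N.

Definition A0 (n : nat) : tensor n :=
  fun i s => match s with
             | x :: _ => if all (pred1 x) s then nat_of_bool (mu n i.+1 x.+1) else 0
             | [::] => 0
             end.

Definition in_window (n q r : nat) (i : 'I_n) : bool :=
  has (fun d => res0 n (r%:Z - q%:Z + d%:Z)%R == val i) (iota 0 (q + 2)).

Definition values_eq2 (n : nat) (s : seq 'I_n) (a b : nat) : bool :=
  all (fun x => (val x == a) || (val x == b)) s &&
  (a \in map val s) && (b \in map val s).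

Definition Ak (n q r : nat) : tensor n :=
  fun i s => match s with
             | x :: _ =>
               if all (pred1 x) s then nat_of_bool (mu n i.+1 x.+1)
               else nat_of_bool (~~ in_window q r i &&
                      values_eq2 s (res0 n (r%:Z - q%:Z - 1)%R) (res0 n r%:Z))
             | [::] => 0
             end.

(* Main.v *)
Require Import Defs.
From mathcomp Require Import all_boot all_order all_algebra.
From mathcomp Require Import zify.




Lemma sum_gt0 (T : finType) (F : T -> nat) :
  reflect (exists i, 0 < F i) (0 < \sum_(i : T) F i).
Proof.
rewrite lt0n sum_nat_eq0; apply: (iffP idP).
- move=> /forallPn [i Hi]; exists i; by rewrite lt0n.
- move=> [i Hi]; apply/forallPn; exists i; by rewrite -lt0n.
Qed.

Lemma prod_gt0 (k : nat) (F : 'I_k -> nat) :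
  reflect (forall i, 0 < F i) (0 < \prod_(i < k) F i).
Proof.
apply: (iffP idP).
- move=> H i; exact: (gt0_prodn H).
- move=> H; exact: prodn_gt0.
Qed.

Lemma S_set1 n m (A : tensor n) j :
  S_set m A 1 j = [set u | 0 < A u (nseq (m-1) j)].
Proof. by apply/setP => u; rewrite !inE. Qed.

Lemma S_setS n m (A : tensor n) t j u : 1 <= t ->
  (u \in S_set m A t.+1 j) =
  [exists s : (m-1).-tuple 'I_n, (0 < A u s) && [forall l, tnth s l \in S_set m A t j]].
Proof.
case: t => // t _.
rewrite !inE /majorization /tpow /= addnK /tprod.
apply/sum_gt0/existsP => [[s Hs]|[s /andP[H1 /forallP H2]]]; exists s.
- rewrite muln_gt0 in Hs; case/andP: Hs => H1 /prod_gt0 H2.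
  rewrite H1 /=; apply/forallP => l; rewrite inE.
  move: (H2 l); rewrite drop_nseq take_nseq //.
  have := ltn_ord l; set p := pow_order m t - 1; move=> hl.
  rewrite -mulnBl; rewrite -{1}(mul1n p); apply: leq_mul => //; lia.
- rewrite muln_gt0 H1 /=; apply/prod_gt0 => l.
  move: (H2 l); rewrite inE drop_nseq take_nseq //.
  have := ltn_ord l; set p := pow_order m t - 1; move=> hl.
  rewrite -mulnBl; rewrite -{1}(mul1n p); apply: leq_mul => //; lia.
Qed.


Section B.
Variables (n m : nat) (Hm : 2 <= m).

Lemma nseq_m1 (x : 'I_n) : nseq (m-1) x = x :: nseq (m-2) x.
Proof. by have -> : m - 1 = (m-2).+1 by lia. Qed.

Lemma gen_step (X : tensor n) t j u :
  1 <= t ->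
  (forall x, X u (nseq (m-1) x) = nat_of_bool (mu n u.+1 x.+1)) ->
  (forall s : (m-1).-tuple 'I_n, 0 < X u s ->
      {subset s <= S_set m X t j} ->
      exists x, x \in S_set m X t j /\ mu n u.+1 x.+1) ->
  (u \in S_set m X t.+1 j) = [exists x, (x \in S_set m X t j) && mu n u.+1 x.+1].
Proof.
move=> Ht HX Hgen; rewrite S_setS //; apply/existsP/existsP.
- move=> [s /andP[H1 /forallP H2]].
  have [|x [Hx Hmu]] := Hgen s H1.
    move=> y /tnthP [l ->]; exact: H2.
  by exists x; rewrite Hx Hmu.
- move=> [x /andP[Hx Hmu]]; exists [tuple of nseq (m-1) x].
  rewrite /= HX Hmu /=; apply/forallP => l; by rewrite tnth_nseq.
Qed.

Lemma A0_step t j u : 1 <= t ->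
  (u \in S_set m (@A0 n) t.+1 j) = [exists x, (x \in S_set m (@A0 n) t j) && mu n u.+1 x.+1].
Proof.
move=> Ht; apply: gen_step => //.
- move=> x; by rewrite nseq_m1 /A0 -nseq_m1 all_pred1_nseq.
- move=> [[|x s'] Hs] //=; rewrite /A0.
  case: ifP => // _; case Hmu: mu => // _ Hsub.
  exists x; split => //; apply: Hsub; by rewrite mem_head.
Qed.

Lemma Ak_step q r t j u : 1 <= t ->
  ((exists x, x \in S_set m (@Ak n q r) t j /\ val x = res0 n (r%:Z - q%:Z - 1)%R) ->
   (exists y, y \in S_set m (@Ak n q r) t j /\ val y = res0 n r%:Z) ->
   ~~ in_window q r u -> exists x, x \in S_set m (@Ak n q r) t j /\ mu n u.+1 x.+1) ->
  (u \in S_set m (@Ak n q r) t.+1 j) =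
     [exists x, (x \in S_set m (@Ak n q r) t j) && mu n u.+1 x.+1].
Proof.
move=> Ht HH; apply: gen_step => //.
- move=> x; by rewrite nseq_m1 /Ak -nseq_m1 all_pred1_nseq.
- move=> [[|x s'] Hs] //=; rewrite /Ak.
  case: ifP => _.
    case Hmu: mu => // _ Hsub.
    exists x; split => //; apply: Hsub; by rewrite mem_head.
  case Hw: in_window => //=; case Hv: values_eq2 => // _ Hsub.
  move: Hv; rewrite /values_eq2 => /andP[/andP[_ Ha] Hb].
  apply: HH; last by rewrite Hw.
  + case/mapP: Ha => y Hy ->; exists y; split => //; by apply: Hsub.
  + case/mapP: Hb => y Hy ->; exists y; split => //; by apply: Hsub.
Qed.

End B.


Definition memI (n c p u : nat) : bool :=
  ((u <= c) && (c - u <= p)) || ((c < u) && (c + n - u <= p)).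

Section C.
Variables (n m : nat) (Hm : 2 <= m) (Hn : 3 <= n).

Lemma muE (u x : 'I_n) : mu n u.+1 x.+1 =
  ((nat_of_ord u == 0) && ((nat_of_ord x == n-2) || (nat_of_ord x == n-1))) || ((0 < nat_of_ord u) && (nat_of_ord x == nat_of_ord u - 1)).
Proof. have := ltn_ord u; have := ltn_ord x; rewrite /mu => H1 H2; apply/idP/idP; lia. Qed.

Lemma f_char (P : 'I_n -> bool) (Q : nat -> bool) (u : 'I_n) :
  (forall x : 'I_n, P x = Q (nat_of_ord x)) ->
  [exists x, P x && mu n u.+1 x.+1] =
  (if nat_of_ord u == 0 then Q (n-2) || Q (n-1) else Q (nat_of_ord u - 1)).
Proof.
move=> HPQ.
have h2 : n - 2 < n by lia.
have h1 : n - 1 < n by lia.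
have h3 : nat_of_ord u - 1 < n by have := ltn_ord u; lia.
case: ifP => Hu.
- apply/existsP/idP.
  + move=> [x /andP[Hx]]; rewrite muE Hu /= => /orP[/orP[/eqP E|/eqP E]|/andP[H _]].
    * by rewrite -E -HPQ Hx.
    * by rewrite -E -HPQ Hx orbT.
    * by rewrite (eqP Hu) in H.
  + move=> /orP[H|H].
    * exists (Ordinal h2); by rewrite HPQ H muE Hu /= eqxx.
    * exists (Ordinal h1); by rewrite HPQ H muE Hu /= eqxx orbT.
- apply/existsP/idP.
  + move=> [x /andP[Hx]]; rewrite muE Hu /= => /andP[_ /eqP E].
    by rewrite -E -HPQ.
  + move=> H; exists (Ordinal h3); rewrite HPQ H muE Hu /= eqxx andbT.
    by rewrite lt0n Hu.
Qed.

Lemma A0_interval (j : 'I_n) (d e : nat) : d <= 1 ->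
  (forall p c, c <= n - 2 -> (n-1) * p + c + d = 1 + e ->
     forall u, (u \in S_set m (@A0 n) 1 j) = memI n c p (nat_of_ord u)) ->
  forall t, 1 <= t -> forall p c, c <= n - 2 -> (n-1) * p + c + d = t + e ->
     forall u, (u \in S_set m (@A0 n) t j) = memI n c p (nat_of_ord u).
Proof.
move=> Hd Hbase; elim=> // t IH Ht p c Hc Heq u.
case: (posnP t) => [t0|tpos]; first by subst t; exact: Hbase.
rewrite A0_step //.
case: (posnP c) => [c0|cpos].
- subst c.
  have pp : 0 < p.
    case: (posnP p) => // p0; subst p; rewrite muln0 in Heq; lia.
  have Heq' : (n-1) * p.-1 + (n-2) + d = t + e.
    move: Heq; rewrite -{1}(prednK pp) mulnS; lia.
  rewrite (@f_char _ (memI n (n-2) p.-1) u (IH tpos _ _ _ Heq')) //.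
  have := ltn_ord u; rewrite /memI; case: ifP => /eqP Hu; lia.
- have Heq' : (n-1) * p + (c - 1) + d = t + e by lia.
  rewrite (@f_char _ (memI n (c-1) p) u (IH tpos _ _ _ Heq')); last by lia.
  have := ltn_ord u; rewrite /memI; case: ifP => /eqP Hu; lia.
Qed.

End C.

Import GRing.Theory Num.Theory.

Lemma res0E (n w : nat) (z : int) (b : bool) : w < n ->
  z = (w%:Z + 1 - (b%:Z * n%:Z))%R -> res0 n z = w.
Proof.
move=> Hw ->; rewrite /res0.
have -> : (w%:Z + 1 - b%:Z * n%:Z - 1 = (- b%:Z) * n%:Z + w%:Z)%R by lia.
rewrite modzMDl modz_small //; lia.
Qed.

Definition memI' (n c p v : nat) : Prop :=
  (v <= c /\ c <= v + p) \/ (c < v /\ c + n <= v + p).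

Lemma memI_alt n c p v : v < n -> memI n c p v <-> memI' n c p v.
Proof. rewrite /memI /memI' => h; split; [move/orP; lia | lia]. Qed.

Lemma arith' n q r p c u a b v : 3 <= n -> q + 3 <= n -> b + 1 = r -> r + 1 <= n -> c + 2 <= n ->
  (p <= q \/ (p = q+1 /\ c+3 <= r)) ->
  (a + q + 2 = r \/ a + q + 2 = r + n) -> a < n ->
  memI' n c p a -> memI' n c p b -> u < n ->
  ((u = 0 /\ v + 1 = n) \/ u = v + 1) ->
  ~ (r <= u+q+1 <= r+q+1) -> ~ (r+n <= u+q+1 <= r+q+1+n) ->
  memI' n c p v.
Proof.
rewrite /memI'.
move=> h1 h2 h3 h4 h5 [h6|[h6 h6']] [h7|h7] h7' [h8|h8] [h9|h9] h10 [[h11 h11']|h11] h12 h13; lia.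
Qed.

Lemma res0E0 (n w : nat) (z : int) : w < n -> z = (w%:Z + 1)%R -> res0 n z = w.
Proof. move=> h ->; apply: (@res0E _ _ _ false) => //; lia. Qed.
Lemma res0E1 (n w : nat) (z : int) : w < n -> z = (w%:Z + 1 - n%:Z)%R -> res0 n z = w.
Proof. move=> h ->; apply: (@res0E _ _ _ true) => //; lia. Qed.

Import GRing.Theory Num.Theory.

Lemma window_out n q r (u : 'I_n) : ~~ in_window q r u ->
  ~ (r <= u+q+1 <= r+q+1) /\ ~ (r+n <= u+q+1 <= r+q+1+n).
Proof.
move=> Hw0; have hu := ltn_ord u.
have /hasPn Hw : ~~ has (fun d => res0 n (r%:Z - q%:Z + d%:Z)%R == (u : nat)) (iota 0 (q+2)) by exact Hw0.
split => /andP[h1 h2].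
- move: (Hw (u+q+1-r)); rewrite mem_iota => /(_ ltac:(lia)) /negP; apply; apply/eqP.
  apply: res0E0 => //. lia.
- move: (Hw (u+q+1-r-n)); rewrite mem_iota => /(_ ltac:(lia)) /negP; apply; apply/eqP.
  apply: res0E1 => //; lia.
Qed.

Lemma res0_r n r : 1 <= r -> r <= n -> res0 n r%:Z = r - 1.
Proof. move=> h1 h2; apply: res0E0; lia. Qed.

Lemma res0_a n q r : 1 <= r -> r < n -> q + 2 < n ->
  res0 n (r%:Z - q%:Z - 1)%R = if q + 2 <= r then r - q - 2 else r + n - q - 2.
Proof.
move=> h1 h2 h3; case: ifP => h.
- apply: res0E0; lia.
- apply: res0E1; lia.
Qed.


Lemma S1_A0 m n (j u : 'I_n) : 2 <= m -> (u \in S_set m (@A0 n) 1 j) = mu n u.+1 j.+1.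
Proof.
move=> Hm; rewrite S_set1 inE (nseq_m1 _ _ Hm) /A0 -(nseq_m1 _ _ Hm) all_pred1_nseq.
by case: mu.
Qed.

Lemma S1_Ak m n q r (j u : 'I_n) : 2 <= m ->
  (u \in S_set m (@Ak n q r) 1 j) = (u \in S_set m (@A0 n) 1 j).
Proof.
move=> Hm; rewrite !S_set1 !inE (nseq_m1 _ _ Hm) /Ak /A0 -(nseq_m1 _ _ Hm) all_pred1_nseq.
by [].
Qed.

Lemma mulS_ge n p : 0 < p -> n <= n * p.
Proof. move=> hp; rewrite -{1}(muln1 n); exact: leq_mul. Qed.

Lemma H_A0 m n q r k (j : 'I_n) t : 2 <= m -> 3 <= n -> q + 3 <= n ->
  k = (n-1) * q + r -> 1 <= r -> r <= n-1 ->
  (j.+1 <= n-2) || (j.+1 == n) -> 1 <= t -> t < k ->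
  (exists x : 'I_n, x \in S_set m (@A0 n) t j /\ val x = res0 n (r%:Z - q%:Z - 1)%R) ->
  (exists y : 'I_n, y \in S_set m (@A0 n) t j /\ val y = res0 n r%:Z) ->
  forall u : 'I_n, ~~ in_window q r u -> exists x : 'I_n, x \in S_set m (@A0 n) t j /\ mu n u.+1 x.+1.
Proof.
move=> Hm Hn Hq Hk Hr1 Hr2 Hj Ht Htk [x [Hx Ex]] [y [Hy Ey]] u Hu.
have hj := ltn_ord j.
have [d [e [Hd [He [Hbase Hbound]]]]] : exists d e : nat, d <= 1 /\ d <= t + e /\
   (forall p c, c <= n - 2 -> (n-1) * p + c + d = 1 + e ->
     forall u : 'I_n, (u \in S_set m (@A0 n) 1 j) = memI n c p u) /\
   (forall p c, (n-1) * p + c + d = t + e -> c <= n-2 -> p <= q \/ (p = q+1 /\ c+3 <= r)).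
  case/orP: Hj => Hj.
  - exists 0, (nat_of_ord j); do 2 (split; first by lia); split.
    + move=> p c Hc Heq w; rewrite S1_A0 // (muE _ _ Hm Hn).
      case: p Heq => [|p]; last by rewrite mulnS => HH; exfalso; nia.
      rewrite muln0 /memI /= => Heq; have hw := ltn_ord w; apply/idP/idP; lia.
    + move=> p c Heq Hc; case: (leqP p q) => Hpq; first by left.
      case: (ltnP (q+1) p) => Hp2.
      * have : (n-1) * (q+2) <= (n-1) * p by apply: leq_mul => //; lia.
        rewrite mulnDr; lia.
      * have Ep : p = q + 1 by lia.
        right; subst p; move: Heq; rewrite mulnDr; lia.
  - exists 1, 0; do 2 (split; first by lia); split.
    + move=> p c Hc Heq w; rewrite S1_A0 // (muE _ _ Hm Hn).
      case: p Heq => [|p]; last by rewrite mulnS => HH; exfalso; nia.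
      rewrite muln0 /memI /= => Heq; have hw := ltn_ord w; apply/idP/idP; lia.
    + move=> p c Heq Hc; left; case: (leqP p q) => // Hpq.
      have : (n-1) * (q+1) <= (n-1) * p by apply: leq_mul => //; lia.
      rewrite mulnDr; lia.
set N := t + e - d.
have hn1 : 0 < n - 1 by lia.
have HN := divn_eq N (n-1).
have Hc := ltn_pmod N hn1.
set p := N %/ (n-1) in HN; set c := N %% (n-1) in HN Hc.
have Heq : (n-1) * p + c + d = t + e by rewrite /N in HN; lia.
have Hc' : c <= n - 2 by lia.
have Sm := A0_interval _ _ Hm Hn j d e Hd Hbase t Ht p c Hc' Heq.
have Hpc := Hbound p c Heq Hc'.
have hu := ltn_ord u.
pose v := if (u : nat) == 0 then n - 1 else u - 1.
have hv : v < n by rewrite /v; case: ifP; lia.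
have Hv : (u = 0 :> nat /\ v + 1 = n) \/ u = v + 1 :> nat by rewrite /v; case: ifP; lia.
pose a := if q+2 <= r then r-q-2 else r+n-q-2.
have Ha : (a + q + 2 = r \/ a + q + 2 = r + n) /\ a < n by rewrite /a; case: ifP; lia.
clearbody v.
exists (Ordinal hv); split.
- rewrite Sm; apply/memI_alt => //=.
  have [Hw1 Hw2] := window_out _ _ _ _ Hu.
  have hx := ltn_ord x; have hy := ltn_ord y.
  move: Hx Hy; rewrite !Sm => /memI_alt - /(_ hx) Hx /memI_alt - /(_ hy) Hy.
  rewrite Ex (res0_a _ _ _ Hr1) -/a in Hx; try lia.
  rewrite Ey res0_r in Hy; try lia.
  apply: (@arith' n q r p c u a (r-1)) => //; try lia.
- rewrite (muE _ _ Hm Hn) /=; case: Hv => [[h1 h2]|h]; apply/orP; [left|right]; apply/andP; split; lia.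
Qed.


Theorem proposition3p2 (m n k q r : nat) :
  2 <= m ->
  1 <= k -> k <= (n - 1) * (n - 2) ->
  k = (n - 1) * q + r -> 1 <= r -> r <= n - 1 ->
  forall t : nat, 1 <= t -> t <= k ->
  forall j : 'I_n, (j.+1 <= n - 2) || (j.+1 == n) ->
  S_set m (@Ak n q r) t j = S_set m (@A0 n) t j.
Proof.
move=> Hm Hk1 Hk2 Hk Hr1 Hr2 t Ht Htk j Hj.
have Hn : 3 <= n.
  case: (leqP 3 n) => // Hn; have E : n - 2 = 0 by lia.
  rewrite E muln0 in Hk2; lia.
have Hq : q + 3 <= n.
  have : (n-1) * q < (n-1) * (n-2) by lia.
  rewrite ltn_pmul2l; lia.
elim: t Ht Htk => // t IH _ Htk.
case: (posnP t) => [->|tpos].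
  by apply/setP => u; exact: S1_Ak.
have IH' := IH tpos (ltnW Htk).
apply/setP => u.
rewrite (A0_step _ _ Hm t j u tpos) (Ak_step _ _ Hm q r t j u tpos).
  by rewrite IH'.
rewrite IH' => Hx Hy Hu.
exact: (H_A0 m n q r k j t Hm Hn Hq Hk Hr1 Hr2 Hj tpos Htk Hx Hy u Hu).
Qed.
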